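(* For every positive integer $n$, the set $\overline{\mathcal{H}}_{n}=\{\gamma\in\mathcal{H}_{n}\mid \pi(\gamma)\in\mathcal{H}_{n-1}\}$ is not empty.
   Context: For a positive integer $n$ and $\gamma=(\gamma_1,\ldots,\gamma_n)\in\mathbb{R}^n$, let $P_\gamma(s)=s^n+\sum_{k=1}^{n}\gamma_k s^{n-k}$. A polynomial is called Hurwitz if all its roots have strictly negative real part. Let $\mathcal{H}_n=\{\gamma\in\mathbb{R}^n\mid P_\gamma \text{ is Hurwitz}\}$. Let $\pi:\mathbb{R}^n\to\mathbb{R}^{n-1}$ be the projection $\pi(\gamma)=(\gamma_1,\ldots,\gamma_{n-1})$, so that $P_{\pi(\gamma)}(s)=s^{n-1}+\sum_{k=1}^{n-1}\gamma_k s^{n-1-k}$. (For $n=1$, $\mathbb{R}^0$ is a point, $P_{\pi(\gamma)}=1$ has no roots and is regarded as Hurwitz, so $\mathcal{H}_0=\mathbb{R}^0$.) *)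

(* Defs.v *)
From HB Require Import structures.
From mathcomp Require Import all_boot all_order all_algebra.
From mathcomp Require Import complex.
Set Implicit Arguments. Unset Strict Implicit. Unset Printing Implicit Defensive.
Import Order.TTheory GRing.Theory Num.Theory.
Local Open Scope ring_scope.
Local Open Scope complex_scope.
Import ComplexField.

(* Coefficient vector gamma = (gamma_1,...,gamma_n) is stored as g : 'rV[R]_n
   with gamma_{k+1} = g 0 k  (0-based index k). *)

Definition Pgam (R : nzRingType) (n : nat) (g : 'rV[R]_n) : {poly R} :=
  'X^n + \sum_(k < n) (g 0 k)%:P * 'X^(n - k.+1).

Definition hurwitz (R : rcfType) (p : {poly R}) : Prop :=
  forall z : R[i], root (map_poly (fun x : R => (x%:C)%C) p) z -> Re z < 0.

Definition Hset (R : rcfType) (n : nat) : 'rV[R]_n -> Prop :=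
  fun g => hurwitz (Pgam g).

Definition proj (R : nzRingType) (n : nat) (g : 'rV[R]_n.+1) : 'rV[R]_n :=
  \row_(k < n) g 0 (widen_ord (leqnSn n) k).

Definition Hbar (R : rcfType) (n : nat) : 'rV[R]_n.+1 -> Prop :=
  fun g => Hset g /\ Hset (proj g).

(* Main.v *)
Require Import Defs.
From mathcomp Require Import all_boot all_order all_algebra.
From mathcomp Require Import complex.
From mathcomp Require Import reals.
From mathcomp Require Import ring lra zify.
Import Order.TTheory GRing.Theory Num.Theory.
Local Open Scope ring_scope.

Section S.
Variable R : rcfType.
Local Notation C := (fun x : R => (x%:C)%C).

Lemma evalP n (g : 'rV[R]_n) (z : R[i]) :
  (map_poly C (Pgam g)).[z] = z ^+ n + \sum_(k < n) ((g 0 k)%:C)%C * z ^+ (n - k.+1).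
Proof.
rewrite /Pgam rmorphD rmorph_sum /= hornerD horner_sum map_polyXn hornerXn.
congr (_ + _); apply: eq_bigr => k _.
by rewrite rmorphM /= map_polyC map_polyXn hornerCM hornerXn.
Qed.

Definition gg (m : nat) : 'rV[R]_m.+1 := \row_(k < m.+1) ('C(m.+1, m - k))%:R.

Lemma natC (n : nat) : ((n%:R : R)%:C)%C = n%:R :> R[i].
Proof. by rewrite rmorph_nat. Qed.

Lemma evalP_gg m (z : R[i]) : (map_poly C (Pgam (gg m))).[z] = (z + 1) ^+ m.+1.
Proof.
rewrite evalP exprD1n [RHS]big_ord_recr /= binn mulr1n addrC; congr (_ + _).
rewrite (reindex_inj rev_ord_inj) /=; apply: eq_bigr => k _.
rewrite mxE natC subSS mulr_natl /=; have := ltn_ord k => hk.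
by congr (z ^+ _ *+ 'C(_, _)); lia.
Qed.

Lemma evalQ_gg m (z : R[i]) :
  (map_poly C (Pgam (proj (gg m)))).[z] = \sum_(j < m.+1) 'C(m.+1, j.+1)%:R * z ^+ j.
Proof.
rewrite evalP [RHS]big_ord_recr /= binn mul1r addrC; congr (_ + _).
rewrite (reindex_inj rev_ord_inj) /=; apply: eq_bigr => k _.
rewrite !mxE natC /=; have := ltn_ord k => hk.
congr ('C(_, _)%:R * _ ^+ _); lia.
Qed.

Lemma zQ (m : nat) (z : R[i]) :
  z * (map_poly C (Pgam (proj (gg m)))).[z] = (z + 1) ^+ m.+1 - 1.
Proof.
rewrite evalQ_gg exprD1n [in RHS]big_ord_recl /= expr0 bin0 mulr1n mulr_sumr [1 + _]addrC addrK.
apply: eq_bigr => j _; rewrite exprS mulr_natl mulrnAr /bump /= add1n //.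
Qed.

End S.

Theorem lemma1 (R : realType) (m : nat) : exists g : 'rV[R]_m.+1, Hbar g.
Proof.
exists (gg _ m); split.
  move=> z; rewrite -complexRe ltcE /= eqxx /=.
  rewrite /root evalP_gg expf_eq0 /= addr_eq0 => /eqP ->.
  by rewrite /= ltrN10.
move=> z; rewrite -complexRe ltcE /= eqxx /=.
rewrite /root => /eqP hQ.
have := @zQ R m z; rewrite hQ mulr0 => /esym /eqP; rewrite subr_eq0 => /eqP h1.
have hz : z != 0.
  apply/eqP => z0; move: hQ; rewrite z0 (@evalQ_gg R m) big_ord_recl /= expr0 mulr1.
  rewrite big1 ?addr0 => [|j _]; last by rewrite expr0n mulr0.
  by move/eqP; rewrite bin1 pnatr_eq0.
have : `|z + 1| ^+ m.+1 = 1 by rewrite -normrX h1 normr1.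
move/eqP; rewrite pexpr_eq1 // => /eqP hn.
have := add_Re2_Im2 (z + 1); rewrite hn expr1n.
case: z hz {hQ h1 hn} => a b hz /=.
move/(congr1 (@complex.Re R)) => /= hab; rewrite addr0 in hab.
have hab' : a ^+ 2 + b ^+ 2 != 0.
  apply: contra hz; rewrite paddr_eq0 ?sqr_ge0 // !sqrf_eq0 => /andP[/eqP -> /eqP ->] //.
have : 0 < a ^+ 2 + b ^+ 2 by rewrite lt_def hab' addr_ge0 ?sqr_ge0.
move: hab; rewrite !expr2 => hab hp; nra.
Qed.
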